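(* Let $k\ge 4$ be an integer, let $t$ be a positive integer divisible by $\operatorname{lcm}(2,3,\ldots,2k-1)$, and let $n$ be an integer with $k^2-k \le n \le 4k^2-10k+5$. Suppose $S$ is a $k$-bounded zero-sum sequence of length $|S| = t+n$ that is $t$-avoiding. Then there exist integers $\alpha>0$ and $\beta>0$ such that $v_\alpha(S) \ge \frac{k}{k+1}n$ and $v_{-\beta}(S) \ge \frac{k}{k+1}n$.
   Context: A sequence is a finite multiset of integers; $|S|$ is its length counted with multiplicity, $v_a(S)$ is the multiplicity of the integer $a$ in $S$, and a subsequence $T$ of $S$ is a sub-multiset. $S$ is zero-sum if the sum of its terms is $0$, and $k$-bounded if all terms lie in $[-k,k]$. A zero-sum sequence $S$ is $t$-avoiding if it has no zero-sum subsequence of length exactly $t$. *)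

(* Defs.v *)
From mathcomp Require Import all_boot all_order all_algebra.
Set Implicit Arguments. Unset Strict Implicit. Unset Printing Implicit Defensive.
Import Order.TTheory GRing.Theory Num.Theory.
Local Open Scope ring_scope.

(* A sequence (finite multiset of integers) is represented by a list [seq int];
   order is irrelevant for every notion below. *)

Definition mult (a : int) (S : seq int) : nat := count_mem a S.

Definition zero_sum (S : seq int) : bool := \sum_(x <- S) x == 0.

Definition k_bounded (k : nat) (S : seq int) : bool :=
  all (fun x => (- (k%:Z) <= x) && (x <= k%:Z)) S.

(* Sub-multisets of S are exactly the masks of S (up to reordering). *)
Definition has_zs_subseq_of_length (t : nat) (S : seq int) : Prop :=
  exists m : bitseq, size m = size S /\ size (mask m S) = t /\ zero_sum (mask m S).

Definition t_avoiding (t : nat) (S : seq int) : Prop :=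
  zero_sum S /\ ~ has_zs_subseq_of_length t S.

Definition lcm_upto (m : nat) : nat := \big[lcmn/1%N]_(2 <= i < m.+1) i.

(* Main.v *)
Require Import Defs.
From mathcomp Require Import all_boot all_order all_algebra zify ring.
Import Order.TTheory GRing.Theory Num.Theory.
Local Open Scope ring_scope.
Local Close Scope ring_scope.

Lemma lcm_dvd m i : (2 <= i <= m)%N -> (i %| lcm_upto m)%N.
Proof.
elim: m => [|m IH] /andP[hi him]; first by lia.
have h1 : (1 <= m)%N by lia.
rewrite /lcm_upto big_nat_recr //= -/(lcm_upto m).
case: (ltngtP i m.+1) => [lt||]; last first.
- by move=> ->; exact: dvdn_lcmr.
- by lia.
apply: dvdn_trans (dvdn_lcml _ _); apply: IH; lia.
Qed.

Lemma cop_of a b u v : (u * a = v * b + 1)%N -> coprime a b.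
Proof.
move=> h; rewrite /coprime; apply/eqP.
have d1 : (gcdn a b %| u * a)%N by apply: dvdn_mull; exact: dvdn_gcdl.
have d2 : (gcdn a b %| v * b)%N by apply: dvdn_mull; exact: dvdn_gcdr.
rewrite h (dvdn_addr _ d2) in d1.
by apply/eqP; rewrite -dvdn1.
Qed.

Lemma cop_add b e : odd b -> coprime (2^e + b) b.
Proof.
move=> ob; rewrite coprime_sym /coprime gcdnDr -/(coprime b (2^e)) coprime_sym.
by apply: coprimeXl; rewrite coprime2n.
Qed.

Lemma t_big k t : (4 <= k)%N -> (0 < t)%N -> (lcm_upto (2 * k - 1) %| t)%N ->
  (k * (2*k-1) * (2*k-3) * (2*k-5) <= t)%N.
Proof.
move=> hk ht hd.
have [j ek] : exists j, k = (j + 4)%N by exists (k - 4)%N; lia.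
have E1 : (2*k-1 = 2*j+7)%N by lia.
have E3 : (2*k-3 = 2*j+5)%N by lia.
have E5 : (2*k-5 = 2*j+3)%N by lia.
have dv i : (2 <= i <= 2*k-1)%N -> (i %| t)%N.
  by move=> hi; apply: dvdn_trans hd; apply: lcm_dvd.
set e := trunc_log 2 (2*k-1).
have he1 : (2 ^ e <= 2*k-1)%N by apply: trunc_logP => //; lia.
have he2 : (2*k-1 < 2 ^ e.+1)%N by apply: trunc_log_ltn.
rewrite expnS in he2.
have c12 : coprime (2*k-1) (2*k-3) by rewrite E1 E3; rewrite (_ : 2*j+7 = 2^1 + (2*j+5))%N; [apply: cop_add; rewrite oddD oddM | lia].
have c13 : coprime (2*k-1) (2*k-5) by rewrite E1 E5; rewrite (_ : 2*j+7 = 2^2 + (2*j+3))%N; [apply: cop_add; rewrite oddD oddM | lia].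
have c23 : coprime (2*k-3) (2*k-5) by rewrite E3 E5; rewrite (_ : 2*j+5 = 2^1 + (2*j+3))%N; [apply: cop_add; rewrite oddD oddM | lia].
have odd_ i : (i < k)%N -> odd (2*k - i.*2.+1).
  move=> hj; have -> : (2*k - i.*2.+1 = (k - i - 1).*2.+1)%N by rewrite -!muln2; lia.
  by rewrite /= odd_double.
have cp i : (i < k)%N -> coprime (2 ^ e) (2*k - i.*2.+1).
  by move=> hj; apply: coprimeXl; rewrite coprime2n odd_.
have o1 := cp 0%N; have o3 := cp 1%N; have o5 := cp 2%N.
rewrite /= in o1 o3 o5.
have o1' : coprime (2^e) (2*k-1) by apply: o1; lia.
have o3' : coprime (2^e) (2*k-3) by apply: o3; lia.
have o5' : coprime (2^e) (2*k-5) by apply: o5; lia.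
have hke : (k <= 2^e)%N by lia.
have D : (2 ^ e * (2*k-1) * (2*k-3) * (2*k-5) %| t)%N.
  rewrite Gauss_dvd; last first.
    by rewrite coprimeMl coprimeMl o5' c13 c23.
  rewrite Gauss_dvd; last by rewrite coprimeMl o3' c12.
  rewrite Gauss_dvd // !dv ?andbT //; lia.
have := dvdn_leq ht D.
nia.
Qed.
Local Open Scope ring_scope.
Fixpoint dz (c : nat) (s : seq int) : bitseq :=
  match s with
  | [::] => [::]
  | x :: s' => if (x == 0) && (0 < c)%N then false :: dz c.-1 s' else true :: dz c s'
  end.

Lemma size_dz c s : size (dz c s) = size s.
Proof. by elim: s c => [|x s IH] c //=; case: ifP => _ /=; rewrite IH. Qed.

Lemma size_mask_dz c s : (c <= count_mem (0:int) s)%N -> size (mask (dz c s) s) = (size s - c)%N.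
Proof.
elim: s c => [|x s IH] c /=; first by rewrite leqn0 => /eqP ->.
case: (x =P 0) => [->|nx] /= hc.
  case: c hc => [|c] hc /=; first by rewrite IH // !subn0.
  by rewrite IH // subSS.
have hc' : (c <= count_mem (0:int) s)%N.
  by move: hc; rewrite add0n.
rewrite IH // subSn //; exact: leq_trans hc' (count_size _ _).
Qed.

Lemma sum_mask_dz c s : \sum_(x <- mask (dz c s) s) x = \sum_(x <- s) x.
Proof.
elim: s c => [|x s IH] c //=.
case: ifP => [/andP[/eqP -> _]|_] /=; rewrite !big_cons ?IH //.
by rewrite add0r.
Qed.

Definition posw (x : int) : int := if 0 < x then x + 1 else 0.

Lemma stepA S : (size S)%:Z - (mult 0 S)%:Z <= \sum_(x <- S) posw x - \sum_(x <- S) x.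
Proof.
elim: S => [|x S IH]; first by rewrite !big_nil.
rewrite /mult /= !big_cons /posw -/(mult 0 S).
have : (1 - (x == 0)%N%:Z <= (if 0 < x then x + 1 else 0) - x).
  case: (ltgtP 0 x) => [h|h|<-] /=.
  - by rewrite subr0 addrC addKr.
  - rewrite subr0 sub0r; lia.
  - by rewrite subrr.
move: IH; move: (x == 0) (if 0 < x then x + 1 else 0) => b y.
move: (\sum_(j <- S) (if 0 < j then j + 1 else 0)) => s1.
move: (\sum_(j <- S) j) (mult 0 S) (size S) => s2 m z.
by case: b => /=; lia.
Qed.

Lemma stepB k S : all (fun x => x <= k%:Z) S ->
  \sum_(x <- S) posw x = (\sum_(i < k) (i.+2) * mult (i.+1)%:Z S)%N%:Z.
Proof.
elim: S => [|x S IH]; first by rewrite big_nil big1 // => i _; rewrite /mult /= muln0.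
move=> /= /andP[hx hS]; rewrite big_cons IH // /mult.
under [in RHS]eq_bigr => i _ do rewrite [count _ _]/= mulnDr.
rewrite [in RHS]big_split PoszD; congr (_ + _).
rewrite /posw; case: ltrP => hx0.
  have [m em] : exists m, x = (m.+1)%:Z by exists (`|x| - 1)%N; lia.
  have hm : (m < k)%N by lia.
  rewrite (bigD1 (Ordinal hm)) //= em eqxx big1 ?addn0; first by lia.
  move=> i hi; suff -> : (Posz m.+1 == Posz i.+1) = false by rewrite muln0.
  apply/negbTE; rewrite eqz_nat eqSS; apply: contra hi => /eqP e.
  by apply/eqP/val_inj => /=; rewrite e.
rewrite big1 // => i _; have -> : (x == (i.+1)%:Z) = false by apply/negbTE; lia.
by rewrite muln0.
Qed.

Lemma stepC k : (\sum_(i < k) (i.+2) * 2 = k * (k + 3))%N.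
Proof. elim: k => [|k IH]; rewrite ?big_ord0 // big_ord_recr /= IH; lia. Qed.

Lemma core k t n S : (1 <= k)%N -> k_bounded k S -> zero_sum S ->
  (t + 1 + mult 0 S <= size S)%N ->
  ((k*n).-1 * (k*(k+3)) < 2*(k.+1)*(t+1))%N ->
  exists alpha : nat, (0 < alpha)%N /\ (k * n <= k.+1 * mult alpha%:Z S)%N.
Proof.
move=> hk hb hz hs hnum.
case: (boolP [exists i : 'I_k, (k*n <= k.+1 * mult (i.+1)%:Z S)%N]).
  by move/existsP => [i hi]; exists i.+1.
rewrite negb_exists => /forallP H; exfalso.
have hb' : all (fun x => x <= k%:Z) S.
  by apply: sub_all hb => x /andP[].
have A := stepA S; rewrite (@stepB k S hb') in A.
move/eqP: hz => hz; rewrite hz subr0 in A.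
set W := (\sum_(i < k) i.+2 * mult i.+1 S)%N in A.
have hW1 : (t + 1 <= W)%N by lia.
have hW2 : (k.+1 * W <= (k*n).-1 * \sum_(i < k) i.+2)%N.
  rewrite /W !big_distrr /=; apply: leq_sum => i _.
  have := H i; rewrite -ltnNge => h.
  have h' : (k.+1 * mult (i.+1)%:Z S <= (k*n).-1)%N by lia.
  by rewrite mulnCA mulnC leq_mul2r h' orbT.
have hC := stepC k; rewrite -big_distrl /= in hC.
move: hC hW2; set T := (\sum_(i < k) i.+2)%N => hC hW2.
have : (2 * (k.+1 * W) <= (k*n).-1 * (k*(k+3)))%N.
  rewrite -hC; nia.
have : (2 * k.+1 * (t+1) <= 2 * (k.+1 * W))%N.
  by rewrite -mulnA leq_mul2l leq_mul2l hW1 !orbT.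
lia.
Qed.

Lemma mult_opp a S : mult a (map -%R S) = mult (- a) S.
Proof.
rewrite /mult count_map; apply: eq_count => x /=.
by rewrite eqr_oppLR.
Qed.

Theorem lemma2p2 (k t n : nat) (S : seq int) :
  (4 <= k)%N -> (0 < t)%N -> (lcm_upto (2 * k - 1) %| t)%N ->
  (k ^ 2 - k <= n)%N -> (n + 10 * k <= 4 * k ^ 2 + 5)%N ->
  k_bounded k S -> zero_sum S -> size S = (t + n)%N -> t_avoiding t S ->
  exists alpha beta : nat, (0 < alpha)%N /\ (0 < beta)%N /\
    (k * n <= k.+1 * mult (alpha%:Z) S)%N /\
    (k * n <= k.+1 * mult (- (beta%:Z))%R S)%N.
Proof.
move=> hk ht hd hn1 hn2 hb hz hs [_ hav].
have tb := @t_big k t hk ht hd.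
have h0 : (mult 0 S < n)%N.
  rewrite ltnNge; apply/negP => h; apply: hav.
  exists (dz n S); split; first exact: size_dz.
  split; first by rewrite size_mask_dz // hs; lia.
  by rewrite /zero_sum sum_mask_dz.
have hs' : (t + 1 + mult 0 S <= size S)%N by lia.
have hnum : ((k*n).-1 * (k*(k+3)) < 2*(k.+1)*(t+1))%N.
  have [j ek] : exists j, k = (j + 4)%N by exists (k - 4)%N; lia.
  subst k.
  have E1 : (2*(j+4)-1 = 2*j+7)%N by lia.
  have E3 : (2*(j+4)-3 = 2*j+5)%N by lia.
  have E5 : (2*(j+4)-5 = 2*j+3)%N by lia.
  rewrite E1 E3 E5 in tb.
  have hn3 : (n <= 4 * (j+4)^2 + 5 - 10*(j+4))%N by lia.
  have hn4 : (n <= 4*j*j + 22*j + 29)%N by lia.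
  have : ((j+4)*n <= (j+4)*(4*j*j + 22*j + 29))%N by rewrite leq_mul2l hn4 orbT.
  nia.
have hk1 : (1 <= k)%N by lia.
have [a [ha1 ha2]] := @core k t n S hk1 hb hz hs' hnum.
have hb2 : k_bounded k (map -%R S).
  rewrite /k_bounded all_map; apply: sub_all hb => x /andP[h1 h2] /=.
  by rewrite lerNl opprK lerNl h1 h2.
have hz2 : zero_sum (map -%R S).
  by rewrite /zero_sum big_map sumrN oppr_eq0.
have hs2 : (t + 1 + mult 0 (map -%R S) <= size (map -%R S))%N.
  by rewrite mult_opp oppr0 size_map.
have [b [hb1 hb3]] := @core k t n (map -%R S) hk1 hb2 hz2 hs2 hnum.
exists a, b; split => //; split => //; split => //.
by rewrite -mult_opp.
Qed.
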